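(* If $\Phi\in\bar\nabla_2$, then there exists $\theta\in(0,1)$ such that the function $t\mapsto\Phi(t^\theta)$ belongs to $\bar\nabla_2$.
   Context: $\bar{\mathcal{P}}$ is the set of all increasing (nondecreasing) $\Phi:[0,\infty]\to[0,\infty]$ such that, with $a(\Phi)=\sup\{t\ge0:\Phi(t)=0\}$ and $b(\Phi)=\inf\{t\ge0:\Phi(t)=\infty\}$ ($\sup\emptyset=0$, $\inf\emptyset=\infty$): $0\le a(\Phi)<\infty$, $0<b(\Phi)\le\infty$; $\lim_{t\to0+}\Phi(t)=\Phi(0)=0$; $\Phi$ is left continuous on $[0,b(\Phi))$; if $b(\Phi)=\infty$ then $\lim_{t\to\infty}\Phi(t)=\Phi(\infty)=\infty$; if $b(\Phi)<\infty$ then $\lim_{t\to b(\Phi)-0}\Phi(t)=\Phi(b(\Phi))$. $\bar\nabla_2$ is the set of $\Phi\in\bar{\mathcal{P}}$ for which there is a constant $k>1$ with $\Phi(t)\le\frac1{2k}\Phi(kt)$ for all $t>0$. *)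

(* Defs.v *)
(* A function Phi : [0,oo] -> [0,oo] is modelled as
   Phi : \bar R -> \bar R; only its values on [0, +oo] matter. *)
From HB Require Import structures.
From mathcomp Require Import all_boot all_order all_algebra.
From mathcomp Require Import all_classical all_reals all_analysis.
Set Implicit Arguments. Unset Strict Implicit. Unset Printing Implicit Defensive.
Import Order.TTheory GRing.Theory Num.Theory.
Import numFieldNormedType.Exports.
Local Open Scope classical_set_scope.
Local Open Scope ring_scope.
Local Open Scope ereal_scope.

Section Defs.
Variable R : realType.

(* a(Phi) = sup {t >= 0 : Phi t = 0}, with sup of the empty set = 0 *)
Definition a_of (Phi : \bar R -> \bar R) : \bar R :=
  maxe 0 (ereal_sup [set t | 0 <= t /\ Phi t = 0]).

Definition b_of (Phi : \bar R -> \bar R) : \bar R :=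
  ereal_inf [set t | 0 <= t /\ Phi t = +oo].

Definition in_Pbar (Phi : \bar R -> \bar R) : Prop :=
  (forall t, 0 <= t -> 0 <= Phi t) /\
  (forall s t, 0 <= s -> s <= t -> Phi s <= Phi t) /\
  a_of Phi < +oo /\
  0 < b_of Phi /\
  Phi 0 = 0 /\
  ((fun x : R => Phi x%:E) @ (0%R)^'+ --> 0) /\
  (forall t : R, (0 < t)%R -> t%:E < b_of Phi ->
     (fun x : R => Phi x%:E) @ t^'- --> Phi t%:E) /\
  (b_of Phi = +oo ->
     Phi +oo = +oo /\ ((fun x : R => Phi x%:E) @ +oo%R --> +oo)) /\
  (b_of Phi < +oo ->
     (fun x : R => Phi x%:E) @ (fine (b_of Phi))^'- --> Phi (b_of Phi)).

Definition in_nabla2 (Phi : \bar R -> \bar R) : Prop :=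
  in_Pbar Phi /\
  exists k : R, (1 < k)%R /\
    forall t : \bar R, 0 < t -> Phi t <= ((2 * k)^-1)%:E * Phi (k%:E * t).

End Defs.

(* Main.v *)
Require Import Defs.
From HB Require Import structures.
From mathcomp Require Import all_boot all_order all_algebra.
From mathcomp Require Import all_classical all_reals all_analysis.
From mathcomp Require Import ring lra.
Import Order.TTheory GRing.Theory Num.Theory.
Import numFieldNormedType.Exports.
Local Open Scope classical_set_scope.
Local Open Scope ring_scope.

Section H.

Variable R : realType.

Lemma to_within {T : Type} (F : set_system T) {FF : Filter F} (f : T -> R)
  (A : set R) (l : R) :
  f @ F --> l -> (\forall x \near F, A (f x)) -> f @ F --> within A (nbhs l).
Proof.
move=> fl fA P /= hP.
have := fl _ hP => /= h.
by apply: filterS2 fA h => x Ax; apply.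
Qed.

Lemma powR_cont (th t : R) : 0 < t -> {for t, continuous (fun x => x `^ th)}.
Proof.
move=> t0; apply: differentiable_continuous; apply/derivable1_diffP.
by apply: derivable_powR; rewrite in_itv /= t0.
Qed.

Lemma powR_left (th t : R) : 0 < th -> 0 < t ->
  (fun x => x `^ th) @ t^'- --> (t `^ th)^'-.
Proof.
move=> th0 t0; apply: to_within.
  by apply: cvg_within_filter; apply: powR_cont.
near=> x; apply: gt0_ltr_powR => //.
- by rewrite nnegrE; apply: ltW; near: x; apply: nbhs_left_gt.
- by rewrite nnegrE; apply: ltW.
Unshelve. all: end_near. Qed.

Lemma powR_right0 (th : R) : 0 < th ->
  (fun x => x `^ th) @ 0^'+ --> 0^'+.
Proof.
move=> th0; apply: to_within; first exact: powR_cvg0.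
by near=> x; apply: powR_gt0; near: x; apply: nbhs_right_gt.
Unshelve. all: end_near. Qed.

Lemma powR_infty (th : R) : 0 < th ->
  (fun x => x `^ th) @ +oo --> +oo.
Proof.
move=> th0; apply/cvgryPge => A.
near=> x.
have hA : A <= (`|A| `^ th^-1) `^ th.
  rewrite -powRrM mulVf ?gt_eqF // powRr1 //; exact: ler_norm.
apply: (le_trans hA); apply: (ge0_ler_powR (ltW th0)).
- by rewrite nnegrE powR_ge0.
- by rewrite nnegrE; near: x; apply: nbhs_pinfty_ge; rewrite num_real.
- by near: x; apply: nbhs_pinfty_ge; rewrite num_real.
Unshelve. all: end_near. Qed.
End H.
Arguments powR_left {R th t}. Arguments powR_right0 {R th}. Arguments powR_infty {R th}.

Local Open Scope ereal_scope.

Section Main.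
Variables (R : realType) (Phi : \bar R -> \bar R) (th : R).
Hypothesis th0 : (0 < th)%R.
Hypothesis P1 : forall t, 0 <= t -> 0 <= Phi t.
Hypothesis P2 : forall s t, 0 <= s -> s <= t -> Phi s <= Phi t.
Hypothesis P3 : a_of Phi < +oo.
Hypothesis P4 : 0 < b_of Phi.
Hypothesis P5 : Phi 0 = 0.
Hypothesis P6 : (fun x : R => Phi x%:E) @ (0%R)^'+ --> 0.
Hypothesis P7 : forall t : R, (0 < t)%R -> t%:E < b_of Phi ->
     (fun x : R => Phi x%:E) @ t^'- --> Phi t%:E.
Hypothesis P8 : b_of Phi = +oo ->
     Phi +oo = +oo /\ ((fun x : R => Phi x%:E) @ +oo%R --> +oo).
Hypothesis P9 : b_of Phi < +oo ->
     (fun x : R => Phi x%:E) @ (fine (b_of Phi))^'- --> Phi (b_of Phi).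

Let Psi := fun t : \bar R => Phi (t `^ th).

Let thN0 : th != 0%R. Proof. by rewrite gt_eqF. Qed.
Let thi : (0 <= th^-1)%R. Proof. by rewrite invr_ge0 ltW. Qed.

Let powK {s : R} : (0 <= s)%R -> powR (powR s th) th^-1 = s.
Proof. by move=> s0; rewrite -powRrM mulfV // powRr1. Qed.
Let powKV {s : R} : (0 <= s)%R -> powR (powR s th^-1) th = s.
Proof. by move=> s0; rewrite -powRrM mulVf // powRr1. Qed.

Let inv_le (t : \bar R) (s : R) : 0 <= t -> (0 <= s)%R ->
  t `^ th <= s%:E -> t <= (powR s th^-1)%:E.
Proof.
case: t => [τ| |] // t0 s0.
- rewrite ?poweR_EFin !lee_fin => h; rewrite lee_fin in t0.
  rewrite -(powK t0); apply: (ge0_ler_powR thi) => //; by rewrite nnegrE ?powR_ge0.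
- by rewrite poweRyr // leye_eq.
Qed.

Let inv_ge (t : \bar R) (s : R) : 0 <= t -> (0 <= s)%R ->
  s%:E <= t `^ th -> (powR s th^-1)%:E <= t.
Proof.
case: t => [τ| |] // t0 s0.
- rewrite ?poweR_EFin !lee_fin => h; rewrite lee_fin in t0.
  rewrite -(powK t0); apply: (ge0_ler_powR thi) => //; by rewrite nnegrE ?powR_ge0.
- by move=> _; apply: leey.
Qed.

Let INF (u : \bar R) : 0 <= u -> b_of Phi < u -> Phi u = +oo.
Proof.
move=> u0 /ereal_inf_lt [s [s0 hs] su].
by apply/eqP; rewrite -leye_eq -hs; apply: P2 => //; apply: ltW.
Qed.

Let bpos : exists2 b : R, (0 < b)%R & b%:E <= b_of Phi.
Proof.
move: P4; case: (b_of Phi) => [b| |] //.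
- by move=> b0; exists b.
- by move=> _; exists 1%R => //; apply: leey.
Qed.

Let Psi_lb {b : R} : (0 <= b)%R -> b%:E <= b_of Phi ->
  (powR b th^-1)%:E <= b_of Psi.
Proof.
move=> b0 hb; apply: le_ereal_inf_tmp => t [t0 ht].
apply: inv_ge => //; apply: (le_trans hb); apply: ereal_inf_lbound.
by split => //; apply: poweR_ge0.
Qed.

Let funE : (fun x : R => Psi x%:E) = (fun y : R => Phi y%:E) \o (fun x : R => powR x th).
Proof. by apply/funext => x; rewrite /Psi /= ?poweR_EFin. Qed.

Let Q3 : a_of Psi < +oo.
Proof.
rewrite /a_of gt_max ltry /=.
have a0 : 0 <= a_of Phi by rewrite /a_of le_max lexx.
have hs : ereal_sup [set t | 0 <= t /\ Phi t = 0] <= a_of Phi.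
  by rewrite /a_of le_max lexx orbT.
move: P3 a0 hs; case: (a_of Phi) => [α| |] // _ a0 hs.
rewrite lee_fin in a0.
apply: (@le_lt_trans _ _ (powR α th^-1)%:E); last exact: ltry.
apply: ge_ereal_sup => t [t0 ht]; apply: inv_le => //.
apply: le_trans hs; apply: ereal_sup_ubound; split => //; exact: poweR_ge0.
Qed.

Let Q4 : 0 < b_of Psi.
Proof.
have [b b0 hb] := bpos.
apply: (lt_le_trans _ (Psi_lb (ltW b0) hb)).
by rewrite lte_fin powR_gt0.
Qed.

Let LB {t : R} : (0 < t)%R -> t%:E < b_of Psi -> (powR t th)%:E < b_of Phi.
Proof.
move=> t0 tb; rewrite ltNge; apply/negP => hb.
have [t' tt' t'b] : exists2 t' : R, (t < t')%R & t'%:E < b_of Psi.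
  move: tb; case: (b_of Psi) => [c| |] //.
  - by rewrite lte_fin => tc; exists ((t + c) / 2)%R; rewrite ?lte_fin; lra.
  - by move=> _; exists (t + 1)%R; [lra | apply: ltry].
have lt' : (powR t th < powR t' th)%R.
  by apply: gt0_ltr_powR => //; rewrite nnegrE; lra.
have hinf : Phi (powR t' th)%:E = +oo.
  apply: INF; first by rewrite lee_fin powR_ge0.
  by apply: (le_lt_trans hb); rewrite lte_fin.
have : b_of Psi <= t'%:E.
  apply: ereal_inf_lbound; split; first by rewrite lee_fin; lra.
  by rewrite /Psi ?poweR_EFin.
by rewrite leNgt t'b.
Qed.

Let Q7 (t : R) : (0 < t)%R -> t%:E < b_of Psi ->
     (fun x : R => Psi x%:E) @ t^'- --> Psi t%:E.
Proof.
move=> t0 tb; rewrite funE /Psi ?poweR_EFin.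
have hpos : (0 < powR t th)%R by apply: powR_gt0.
exact: cvg_comp (powR_left th0 t0) (P7 _ hpos (LB t0 tb)).
Qed.

Let Q8 : b_of Psi = +oo ->
     Psi +oo = +oo /\ ((fun x : R => Psi x%:E) @ +oo%R --> +oo).
Proof.
move=> hb.
have bP : b_of Phi = +oo.
  case Eb: (b_of Phi) => [b| |] //; last by move: P4; rewrite Eb.
  have b0 : (0 < b)%R by move: P4; rewrite Eb lte_fin.
  have hinf : Phi (b + 1)%:E = +oo.
    by apply: INF; rewrite ?Eb ?lee_fin ?lte_fin; lra.
  have : b_of Psi <= (powR (b + 1) th^-1)%:E.
    apply: ereal_inf_lbound; split; first by rewrite lee_fin powR_ge0.
    by rewrite /Psi ?poweR_EFin powKV //; lra.
  by rewrite hb leye_eq.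
have [h1 h2] := P8 bP.
split; first by rewrite /Psi poweRyr.
rewrite funE; exact: cvg_comp (powR_infty th0) h2.
Qed.

Let Q9 : b_of Psi < +oo ->
     (fun x : R => Psi x%:E) @ (fine (b_of Psi))^'- --> Psi (b_of Psi).
Proof.
move=> hb.
have [t [t0 ht] tlt] := ereal_inf_lt hb.
move: t0 tlt ht; case: t => [τ| |] // t0 _ ht.
rewrite lee_fin in t0.
have hP : b_of Phi <= (powR τ th)%:E.
  apply: ereal_inf_lbound; split; first by rewrite lee_fin powR_ge0.
  by move: ht; rewrite /Psi ?poweR_EFin.
have P9' := P9.
case Eb: (b_of Phi) P9' hP => [β| |] P9' hP //; last by move: P4; rewrite Eb.
have b0 : (0 < β)%R by move: P4; rewrite Eb lte_fin.
have hβ : β%:E <= b_of Phi by rewrite Eb.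
have lb := Psi_lb (ltW b0) hβ.
case Ec: (b_of Psi) lb => [γ| |] lb //; first last.
  by move: hb; rewrite Ec.
rewrite lee_fin in lb.
have g0 : (0 < γ)%R by apply: lt_le_trans lb; apply: powR_gt0.
have gb : powR γ th = β.
  apply/eqP; rewrite eq_le; apply/andP; split.
  - rewrite leNgt; apply/negP => hlt.
    pose u := ((β + powR γ th) / 2)%R.
    have bu : (β < u)%R by rewrite /u; lra.
    have ug : (u < powR γ th)%R by rewrite /u; lra.
    have hinf : Phi u%:E = +oo by apply: INF; rewrite ?Eb ?lee_fin ?lte_fin; lra.
    have : b_of Psi <= (powR u th^-1)%:E.
      apply: ereal_inf_lbound; split; first by rewrite lee_fin powR_ge0.
      by rewrite /Psi ?poweR_EFin powKV //; lra.
    rewrite Ec lee_fin => hg.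
    have : (powR γ th <= powR (powR u th^-1) th)%R.
      by apply: (ge0_ler_powR (ltW th0)) => //; rewrite nnegrE ?powR_ge0 //; lra.
    rewrite powKV; lra.
  - rewrite -(powKV (ltW b0)).
    by apply: (ge0_ler_powR (ltW th0)) => //; rewrite nnegrE ?powR_ge0 //; lra.
rewrite /= funE /Psi ?poweR_EFin gb.
have := P9' (ltry _); rewrite /= => h.
apply: cvg_comp h.
by rewrite -gb; apply: powR_left.
Qed.

Lemma Psi_Pbar : in_Pbar Psi.
Proof.
split; first by move=> t t0; apply: P1; apply: poweR_ge0.
split.
  move=> s t s0 st; apply: P2; first exact: poweR_ge0.
  apply: gt0_ler_poweR; rewrite ?in_itv /= ?leey ?andbT //; first exact: ltW.
  exact: le_trans st.
split; first exact: Q3.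
split; first exact: Q4.
split; first by rewrite /Psi poweR0r.
split; first by rewrite funE; apply: cvg_comp (powR_right0 th0) P6.
split; first exact: Q7.
split; first exact: Q8.
exact: Q9.
Qed.

End Main.

Theorem lemma4p5 (R : realType) (Phi : \bar R -> \bar R) :
  in_nabla2 Phi ->
  exists theta : R, (0 < theta < 1)%R /\
    in_nabla2 (fun t : \bar R => Phi (t `^ theta)).
Proof.
move=> [[P1 [P2 [P3 [P4 [P5 [P6 [P7 [P8 P9]]]]]]]] [k [k1 hk]]].
have kk1 : (1 < k * k)%R by nra.
have kkp : (0 < k * k)%R by nra.
have lk : (0 < ln (k * k))%R by apply: ln_gt0.
have l2 : (ln (k * k) < ln (2 * (k * k)))%R.
  by rewrite ltr_ln ?posrE //; lra.
have lK : (0 < ln (2 * (k * k)))%R by lra.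
pose th := (ln (k * k) / ln (2 * (k * k)))%R.
have th0 : (0 < th)%R by apply: divr_gt0.
have th1 : (th < 1)%R by rewrite /th ltr_pdivrMr // mul1r.
exists th; split; first by rewrite th0 th1.
split; first exact: (@Psi_Pbar R Phi th th0 P1 P2 P3 P4 P5 P6 P7 P8 P9).
pose K := (2 * (k * k))%R.
have K1 : (1 < K)%R by rewrite /K; lra.
have K0 : (0 < K)%R by lra.
have KE : powR K th = (k * k)%R.
  rewrite /powR gt_eqF // /th /K -mulrA mulVf ?mulr1 ?lnK ?posrE //.
  by rewrite gt_eqF.
exists K; split => // t t0.
have c0 : (0 <= (2 * k)^-1)%R by rewrite invr_ge0; lra.
have c1 : ((2 * k)^-1 < 1)%R by rewrite invf_lt1; lra.
have cc : ((2 * K)^-1 = (2 * k)^-1 * (2 * k)^-1)%R.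
  have -> : (2 * K = 2 * k * (2 * k))%R.
    rewrite /K; ring.
  by rewrite invfM.
have c'0 : (0 < (2 * K)^-1)%R by rewrite invr_gt0; lra.
case: t t0 => [τ| |] // t0.
- rewrite lte_fin in t0.
  rewrite -EFinM !poweR_EFin powRM ?KE; [|lra|lra].
  set s := powR τ th.
  have s0 : (0 < s)%R by apply: powR_gt0.
  apply: (le_trans (hk s%:E _)); first by rewrite lte_fin.
  rewrite -EFinM cc (EFinM ((2 * k)^-1)) -muleA.
  apply: lee_wpmul2l; first by rewrite lee_fin.
  have := hk (k * s)%:E; rewrite lte_fin -EFinM mulrA => h; apply: h.
  by apply: mulr_gt0 => //; lra.
- have ky : k%:E * +oo = +oo by rewrite mulry gtr0_sg ?mul1e //; lra.
  have Ky : K%:E * +oo = +oo by rewrite mulry gtr0_sg ?mul1e //; lra.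
  rewrite Ky poweRyr ?gt_eqF //.
  have := hk +oo (ltry _); rewrite ky.
  have := P1 +oo (leey _).
  case: (Phi +oo) => [r| |] //.
  + rewrite lee_fin -EFinM lee_fin => r0 hr.
    have -> : r = 0%R by nra.
    by rewrite mule0.
  + by move=> _ _; rewrite mulry gtr0_sg // mul1e.
Qed.
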